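(* Let $d, d' \ge 1$ and $n \ge 1$ be integers, and let $\mathbb{K}=\mathbb{Q}=\{h_1,\dots,h_n\}\subset\mathbb{R}^d$ be any set of node representations. Consider the GAT family of scoring functions $\mathcal{F}_{\mathrm{GAT}}=\{e_{a,W} : a\in\mathbb{R}^{2d'},\ W\in\mathbb{R}^{d'\times d}\}$, where $$e_{a,W}(h_i,h_j)=\mathrm{LeakyReLU}\big(a^{\top}[\,W h_i \,\|\, W h_j\,]\big),$$ with attention coefficients $\alpha_{ij}=\exp(e(h_i,h_j))/\sum_{j'}\exp(e(h_i,h_{j'}))$ obtained by softmax normalization over keys. Then this family computes static attention for $\mathbb{K}$ and $\mathbb{Q}$. In particular, if $n>1$, it does not compute dynamic attention for $\mathbb{K}$ and $\mathbb{Q}$.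
   Context: Here $\|$ denotes vector concatenation and $\mathrm{LeakyReLU}(x)=x$ for $x\ge 0$ and $\mathrm{LeakyReLU}(x)=cx$ for $x<0$ with a fixed slope $0<c<1$. Write $[n]=\{1,\dots,n\}$. Static scoring: a family $\mathcal{F}$ of functions $\mathbb{R}^d\times\mathbb{R}^d\to\mathbb{R}$ computes static scoring for keys $\{k_1,\dots,k_n\}$ and queries $\{q_1,\dots,q_m\}$ if for every $f\in\mathcal{F}$ there is an index $j_f\in[n]$ such that $f(q_i,k_{j_f})\ge f(q_i,k_j)$ for all $i\in[m]$, $j\in[n]$. Dynamic scoring: $\mathcal{F}$ computes dynamic scoring for these keys and queries if for every map $\varphi:[m]\to[n]$ there is $f\in\mathcal{F}$ such that $f(q_i,k_{\varphi(i)})>f(q_i,k_j)$ for all $i\in[m]$ and all $j\in[n]$ with $j\neq\varphi(i)$. A family of attention functions computes static (resp. dynamic) attention if its scoring function family computes static (resp. dynamic) scoring, possibly followed by a monotonic normalization such as softmax. *)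

(* Defs.v *)
From HB Require Import structures.
From mathcomp Require Import all_boot all_order all_algebra.
Set Implicit Arguments. Unset Strict Implicit. Unset Printing Implicit Defensive.
Import Order.TTheory GRing.Theory Num.Theory.
Local Open Scope ring_scope.

Definition leaky_relu (R : realFieldType) (c x : R) : R :=
  if 0 <= x then x else c * x.

(* GAT scoring function e_{a,W}(h_i,h_j) = LeakyReLU(a^T [W h_i || W h_j]).
   Vectors in R^d are column vectors 'cV[R]_d; a : R^{2d'} = 'cV_(d' + d'),
   and || is col_mx (vertical concatenation). *)
Definition gat_score (R : realFieldType) (c : R) (d d' : nat)
    (a : 'cV[R]_(d' + d')) (W : 'M[R]_(d', d)) (hi hj : 'cV[R]_d) : R :=
  leaky_relu c ((a^T *m col_mx (W *m hi) (W *m hj)) 0 0).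

Definition static_scoring (R : realFieldType) (P X : Type) (fam : P -> X -> X -> R)
    (n m : nat) (k : 'I_n -> X) (q : 'I_m -> X) : Prop :=
  forall p : P, exists jf : 'I_n,
    forall (i : 'I_m) (j : 'I_n), fam p (q i) (k j) <= fam p (q i) (k jf).

Definition dynamic_scoring (R : realFieldType) (P X : Type) (fam : P -> X -> X -> R)
    (n m : nat) (k : 'I_n -> X) (q : 'I_m -> X) : Prop :=
  forall phi : 'I_m -> 'I_n, exists p : P,
    forall (i : 'I_m) (j : 'I_n), j != phi i ->
      fam p (q i) (k j) < fam p (q i) (k (phi i)).

Definition gat_family (R : realFieldType) (c : R) (d d' : nat) :
    ('cV[R]_(d' + d') * 'M[R]_(d', d)) -> 'cV[R]_d -> 'cV[R]_d -> R :=
  fun p => gat_score c p.1 p.2.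

(* A family of attention functions computes static/dynamic attention iff its
   scoring family computes static/dynamic scoring (normalization such as
   softmax is monotone and does not affect this, per the paper's definition). *)
Definition computes_static_attention (R : realFieldType) (P X : Type)
    (fam : P -> X -> X -> R) n m (k : 'I_n -> X) (q : 'I_m -> X) :=
  static_scoring fam k q.
Definition computes_dynamic_attention (R : realFieldType) (P X : Type)
    (fam : P -> X -> X -> R) n m (k : 'I_n -> X) (q : 'I_m -> X) :=
  dynamic_scoring fam k q.
Arguments gat_family {R} c d d' _ _ _.

(* Main.v *)
Require Import Defs.
From HB Require Import structures.
From mathcomp Require Import all_boot all_order all_algebra.
From mathcomp Require Import ring lra.
Import Order.TTheory GRing.Theory Num.Theory.
Local Open Scope ring_scope.

Lemma lr_mono (R : realFieldType) (c : R) (hc0 : 0 < c) (x y : R) :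
  x <= y -> leaky_relu c x <= leaky_relu c y.
Proof.
rewrite /leaky_relu => hxy.
case: (lerP 0 x) => hx; case: (lerP 0 y) => hy.
- by [].
- lra.
- nra.
- nra.
Qed.

Lemma score_split (R : realFieldType) (c : R) (d d' : nat)
    (a : 'cV[R]_(d' + d')) (W : 'M[R]_(d', d)) (hi hj : 'cV[R]_d) :
  gat_score c a W hi hj =
  leaky_relu c ((lsubmx a^T *m (W *m hi)) 0 0 + (rsubmx a^T *m (W *m hj)) 0 0).
Proof.
by rewrite /gat_score -[a^T]hsubmxK mul_row_col mxE row_mxKl row_mxKr.
Qed.

Lemma exists_max (R : realFieldType) (n : nat) (f : 'I_n -> R) (j0 : 'I_n) :
  exists j, forall j', f j' <= f j.
Proof.
case: (@arg_maxP _ R _ j0 xpredT f isT) => j _ H.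
by exists j => j'; apply: H.
Qed.

Theorem theorem1 (R : realFieldType) (c : R) (hc0 : 0 < c) (hc1 : c < 1)
    (d d' n : nat) (hd : (1 <= d)%N) (hd' : (1 <= d')%N) (hn : (1 <= n)%N)
    (h : 'I_n -> 'cV[R]_d) :
  computes_static_attention (gat_family c d d') h h /\
  ((1 < n)%N -> ~ computes_dynamic_attention (gat_family c d d') h h).
Proof.
split.
- move=> [a W].
  have [jf Hjf] := @exists_max R n (fun j => (rsubmx a^T *m (W *m h j)) 0 0) (Ordinal hn).
  exists jf => i j; rewrite /gat_family /= !score_split.
  apply: lr_mono => //; rewrite lerD2l; exact: Hjf.
- move=> hn1 Hdyn.
  have [[a W] Hp] := Hdyn id.
  pose i0 : 'I_n := Ordinal hn.
  pose i1 : 'I_n := Ordinal hn1.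
  have ne : i1 != i0 by [].
  have ne' : i0 != i1 by [].
  have H1 := Hp i0 i1 ne'.
  have H2 := Hp i1 i0 ne.
  move: H1 H2; rewrite /gat_family /= !score_split.
  set s0 := (lsubmx a^T *m (W *m h i0)) 0 0.
  set s1 := (lsubmx a^T *m (W *m h i1)) 0 0.
  set t0 := (rsubmx a^T *m (W *m h i0)) 0 0.
  set t1 := (rsubmx a^T *m (W *m h i1)) 0 0.
  move=> H1 H2.
  case: (lerP t1 t0) => ht.
  + have ht' : s1 + t1 <= s1 + t0 by rewrite lerD2l.
    have := @lr_mono R c hc0 _ _ ht'.
    by rewrite leNgt H2.
  + have ht' : s0 + t0 <= s0 + t1 by rewrite lerD2l ltW.
    have := @lr_mono R c hc0 _ _ ht'.
    by rewrite leNgt H1.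
Qed.
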